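(* With the emerging metric on finite residue rings described in the context, the finite rings $\mathbb{Z}/n\mathbb{Z}$ locally approximate the real numbers: $\mathsf{lm}^{\mathrm{loc}}\,\mathrm{K}_n=\mathbb{R}$. That is, the relation $\approx$ on $\mathrm{K}_{/\mathfrak{l}}$ is compatible with the ring operations of $\mathrm{K}$, and the quotient $\mathrm{K}_{/\mathfrak{l}}/\!\approx$ with the induced operations and metric is isomorphic to $(\mathbb{R},+,\cdot)$ with the metric $|x-y|$.
   Context: Let $\mathcal{D}$ be a non-principal ultrafilter on $\mathbb{N}$ containing the set of primes, ${}^*\mathbb{Z}=\mathbb{Z}^{\mathbb{N}}/\mathcal{D}$, and $\mathfrak{q}\in{}^*\mathbb{Z}$ the class of $(q)_{q\in\mathbb{N}}$; let $\mathrm{F}={}^*\mathbb{Z}/\mathfrak{q}\,{}^*\mathbb{Z}\cong\prod_{\mathcal{D}}\mathbb{Z}/q\mathbb{Z}$. Assume there is a model ${}^f\mathbb{Z}$ of arithmetic with $\mathbb{Z}\prec{}^f\mathbb{Z}\prec{}^*\mathbb{Z}$ such that $\mathfrak{q}>k$ for all $k\in{}^f\mathbb{Z}$, and let $\mathfrak{l}\in{}^f\mathbb{Z}$ be a positive infinite integer (so $\mathfrak{l}^n<\mathfrak{q}$ for all $n\in\mathbb{N}$). Let $\mathcal{N}\in{}^*\mathbb{Z}$, $\mathcal{N}\ge\mathfrak{q}$, be the class of a sequence of positive integers $(n_j)_j$ with $\mathfrak{q}\mid\mathcal{N}$, and $\mathrm{K}={}^*\mathbb{Z}/\mathcal{N}\,{}^*\mathbb{Z}\cong\prod_{\mathcal{D}}\mathbb{Z}/n_j\mathbb{Z}$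 (the rings $\mathrm{K}_n=\mathbb{Z}/n\mathbb{Z}$); let $s:\mathrm{K}\to\mathrm{F}$ be reduction mod $\mathfrak{q}$. On $\mathrm{F}$: for $m\in\mathbb{N}$ let $Z(m)=\{k\in{}^*\mathbb{Z}:|k|<\mathfrak{l}^m\}$ (embedded in $\mathrm{F}$ by reduction), $S_m(\mathrm{F})=\{z\in\mathrm{F}:\exists k_1,k_2\in Z(m),k_2\neq0,\ z=k_1k_2^{-1},\ |k_1|/|k_2|\le m\}$, $\mathrm{F}_{/\mathfrak{l}}=\bigcup_m S_m(\mathrm{F})$, $\|z\|=\mathrm{st}(|k_1|/|k_2|)$ for the minimal such pair, $\mathsf{d}_F(z_1,z_2)=\|z_1-z_2\|$. On $\mathrm{K}$: $\mathrm{K}_{/\mathfrak{l}}=s^{-1}(\mathrm{F}_{/\mathfrak{l}})$ and $\mathsf{d}_K(x,y)=\mathsf{d}_F(s(x),s(y))$. Define $x\approx y$ iff $\mathsf{d}_K(x,y)\le1/n$ for all $n\in\mathbb{N}$. The local ultraproduct of the $\mathrm{K}_n$ is $\mathrm{K}_{/\mathfrak{l}}/\!\approx$ with induced operations and metric. *)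

(* Defs.v *)
From Stdlib Require Import Reals ZArith Znumtheory.
Open Scope R_scope.

(* Sequences of integers: representatives of elements of *Z = Z^N / D,
   and (by reduction) of K = *Z / N*Z and F = *Z / q*Z. *)
Definition Zseq := nat -> Z.

Record ultrafilter (D : (nat -> Prop) -> Prop) : Prop := {
  uf_full  : D (fun _ => True);
  uf_proper : ~ D (fun _ => False);
  uf_inter : forall A B, D A -> D B -> D (fun j => A j /\ B j);
  uf_up    : forall A B : nat -> Prop, (forall j, A j -> B j) -> D A -> D B;
  uf_ultra : forall A : nat -> Prop, D A \/ D (fun j => ~ A j) }.

Definition nonprincipal (D : (nat -> Prop) -> Prop) : Prop :=
  forall k : nat, ~ D (fun j => j = k).

Section Ultra.
Variable D : (nat -> Prop) -> Prop.

Definition sadd (a b : Zseq) : Zseq := fun j => (a j + b j)%Z.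
Definition smul (a b : Zseq) : Zseq := fun j => (a j * b j)%Z.
Definition sopp (a : Zseq) : Zseq := fun j => (- a j)%Z.
Definition sconst (k : Z) : Zseq := fun _ => k.

Definition zeq (a b : Zseq) : Prop := D (fun j => a j = b j).
Definition zlt (a b : Zseq) : Prop := D (fun j => (a j < b j)%Z).

Definition qq : Zseq := fun j => Z.of_nat j.

(* equality in F = *Z / q *Z  (F = prod_D Z/jZ) *)
Definition Feq (x y : Zseq) : Prop := D (fun j => (Z.of_nat j | x j - y j)%Z).
(* equality in K = *Z / N *Z  (K = prod_D Z/n_j Z) *)
Definition Keq (n : Zseq) (x y : Zseq) : Prop := D (fun j => (n j | x j - y j)%Z).

Inductive term : Type :=
| tvar : nat -> term
| tzero : term
| tone : term
| tadd : term -> term -> term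
| tmul : term -> term -> term
| topp : term -> term.

Inductive formula : Type :=
| feq : term -> term -> formula
| flt : term -> term -> formula
| fnot : formula -> formula
| fand : formula -> formula -> formula
| fex : formula -> formula.   (* de Bruijn: binds variable 0 *)

Fixpoint teval (env : nat -> Zseq) (t : term) : Zseq :=
  match t with
  | tvar i => env i
  | tzero => sconst 0
  | tone => sconst 1
  | tadd a b => sadd (teval env a) (teval env b)
  | tmul a b => smul (teval env a) (teval env b)
  | topp a => sopp (teval env a)
  end.

Definition scons (a : Zseq) (env : nat -> Zseq) : nat -> Zseq :=
  fun i => match i with O => a | S i' => env i' end.

Fixpoint holds (P : Zseq -> Prop) (env : nat -> Zseq) (f : formula) : Prop :=
  match f with
  | feq a b => zeq (teval env a) (teval env b)
  | flt a b => zlt (teval env a) (teval env b)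
  | fnot g => ~ holds P env g
  | fand g h => holds P env g /\ holds P env h
  | fex g => exists a, P a /\ holds P (scons a env) g
  end.

Definition elem_substructure (S : Zseq -> Prop) : Prop :=
  (forall a b, zeq a b -> S a -> S b) /\
  (forall (f : formula) (env : nat -> Zseq), (forall i, S (env i)) ->
     (holds S env f <-> holds (fun _ => True) env f)).

Definition contains_Z (S : Zseq -> Prop) : Prop := forall k : Z, S (sconst k).

Variable l : Zseq.

Definition inZm (m : nat) (k : Zseq) : Prop :=
  D (fun j => (Z.abs (k j) < l j ^ Z.of_nat m)%Z).

(* (k1,k2) witnesses z in S_m(F):  k1,k2 in Z(m), k2 <> 0 in *Z,
   z = k1 k2^{-1} in F (i.e. z * k2 = k1 in F, k2 being invertible in F),
   and |k1|/|k2| <= m *)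
Definition Sm_pair (m : nat) (z k1 k2 : Zseq) : Prop :=
  inZm m k1 /\ inZm m k2 /\ ~ zeq k2 (sconst 0) /\
  Feq (smul z k2) k1 /\
  D (fun j => (Z.abs (k1 j) <= Z.of_nat m * Z.abs (k2 j))%Z).

Definition inSm (m : nat) (z : Zseq) : Prop := exists k1 k2, Sm_pair m z k1 k2.

Definition Fl (z : Zseq) : Prop := exists m, inSm m z.

(* standard part of the hyperreal class of a real sequence u: its D-limit *)
Definition Dlim (u : nat -> R) (r : R) : Prop :=
  forall eps, 0 < eps -> D (fun j => Rabs (u j - r) < eps).

Definition normF (z : Zseq) (r : R) : Prop :=
  exists m k1 k2, Sm_pair m z k1 k2 /\
    Dlim (fun j => IZR (Z.abs (k1 j)) / IZR (Z.abs (k2 j))) r.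

(* K_{/l} = s^{-1}(F_{/l}); s = reduction mod q is the identity on representatives *)
Definition Kl (x : Zseq) : Prop := Fl x.

Definition dK (x y : Zseq) (r : R) : Prop := normF (sadd x (sopp y)) r.

Definition approx (x y : Zseq) : Prop :=
  forall n : nat, (0 < n)%nat -> exists r, dK x y r /\ r <= / INR n.

End Ultra.

(* Main.v *)
Require Import Defs.
From Stdlib Require Import Reals ZArith Znumtheory Lia Lra Psatz ClassicalEpsilon.
Open Scope R_scope.

Lemma Dmp D (HU : ultrafilter D) (A B : nat -> Prop) :
  D A -> D (fun j => A j -> B j) -> D B.
Proof.
  intros HA HAB. apply (uf_up _ HU (fun j => A j /\ (A j -> B j))).
  - intros j [a b]; auto.
  - apply uf_inter; auto.
Qed.

Lemma Dall D (HU : ultrafilter D) (A : nat -> Prop) : (forall j, A j) -> D A.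
Proof. intros H. apply (uf_up _ HU (fun _ => True)); auto. apply uf_full; auto. Qed.

Lemma Dex D (HU : ultrafilter D) (A : nat -> Prop) : D A -> exists j, A j.
Proof.
  intros H. destruct (classic (exists j, A j)) as [e|n]; auto.
  exfalso. apply (uf_proper _ HU). apply (uf_up _ HU A); auto.
  intros j a; apply n; eauto.
Qed.

Ltac dmp H := eapply Dmp; [eassumption | exact H | ].
Ltac dall := apply Dall; [eassumption|].
Ltac rabs := unfold Rabs in *; repeat match goal with
  | H : context [Rcase_abs ?x] |- _ => destruct (Rcase_abs x)
  | |- context [Rcase_abs ?x] => destruct (Rcase_abs x) end.

Lemma Dlim_unique D (HU : ultrafilter D) u a b : Dlim D u a -> Dlim D u b -> a = b.
Proof.
  intros Ha Hb. destruct (Req_dec a b) as [e|ne]; auto. exfalso.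
  assert (He : 0 < Rabs (a - b) / 2).
  { assert (0 < Rabs (a - b)) by (apply Rabs_pos_lt; lra). lra. }
  destruct (Dex D HU (fun j => Rabs (u j - a) < Rabs (a - b) / 2 /\ Rabs (u j - b) < Rabs (a - b) / 2)) as [j [h1 h2]].
  { apply uf_inter; auto. }
  rabs; lra.
Qed.

Lemma Dlim_ext D (HU : ultrafilter D) u v a :
  D (fun j => u j = v j) -> Dlim D u a -> Dlim D v a.
Proof.
  intros E H eps he. dmp (H eps he). dmp E. dall. intros j e h. rewrite <- e; auto.
Qed.

Lemma Dlim_const D (HU : ultrafilter D) c : Dlim D (fun _ => c) c.
Proof. intros eps he. dall. intros j. rewrite Rminus_diag, Rabs_R0. auto. Qed.

Lemma Dlim_plus D (HU : ultrafilter D) u v a b :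
  Dlim D u a -> Dlim D v b -> Dlim D (fun j => u j + v j) (a + b).
Proof.
  intros Ha Hb eps he. dmp (Ha (eps/2) ltac:(lra)). dmp (Hb (eps/2) ltac:(lra)).
  dall. intros j h1 h2. rabs; lra.
Qed.

Lemma Dlim_opp D (HU : ultrafilter D) u a :
  Dlim D u a -> Dlim D (fun j => - u j) (- a).
Proof.
  intros Ha eps he. dmp (Ha eps he). dall. intros j h1. rabs; lra.
Qed.

Lemma Dlim_abs D (HU : ultrafilter D) u a :
  Dlim D u a -> Dlim D (fun j => Rabs (u j)) (Rabs a).
Proof.
  intros Ha eps he. dmp (Ha eps he). dall. intros j h1. rabs; lra.
Qed.

Lemma Dlim_mult D (HU : ultrafilter D) u v a b :
  Dlim D u a -> Dlim D v b -> Dlim D (fun j => u j * v j) (a * b).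
Proof.
  intros Ha Hb eps he.
  set (d := Rmin 1 (eps / (Rabs a + Rabs b + 1))).
  assert (hp : 0 < Rabs a + Rabs b + 1) by (pose proof (Rabs_pos a); pose proof (Rabs_pos b); lra).
  assert (hd : 0 < d).
  { unfold d, Rmin. destruct (Rle_dec 1 (eps / (Rabs a + Rabs b + 1))); try lra.
    apply Rdiv_lt_0_compat; lra. }
  assert (hd1 : d <= 1) by apply Rmin_l.
  assert (hd2 : d * (Rabs a + Rabs b + 1) <= eps).
  { assert (d <= eps / (Rabs a + Rabs b + 1)) by apply Rmin_r.
    apply Rmult_le_compat_r with (r := Rabs a + Rabs b + 1) in H; try lra.
    unfold Rdiv in H. rewrite Rmult_assoc, Rinv_l in H; lra. }
  dmp (Ha d hd). dmp (Hb d hd). dall. intros j h1 h2.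
  replace (u j * v j - a * b) with ((u j - a) * (v j - b) + a * (v j - b) + b * (u j - a)) by ring.
  eapply Rle_lt_trans. apply Rabs_triang.
  eapply Rle_lt_trans. apply Rplus_le_compat_r. apply Rabs_triang.
  rewrite !Rabs_mult.
  pose proof (Rabs_pos a); pose proof (Rabs_pos b);
  pose proof (Rabs_pos (u j - a)); pose proof (Rabs_pos (v j - b)).
  nra.
Qed.

Lemma Dlim_exists D (HU : ultrafilter D) u B :
  D (fun j => Rabs (u j) <= B) -> exists r, Dlim D u r.
Proof.
  intros HB.
  set (E := fun x => D (fun j => x <= u j)).
  assert (bE : bound E).
  { exists B. intros x Ex. destruct (Rle_dec x B) as [h|h]; auto. exfalso.
    destruct (Dex D HU _ (uf_inter _ HU _ _ Ex HB)) as [j [h1 h2]]. rabs; lra. }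
  assert (nE : exists x, E x).
  { exists (-B). unfold E. dmp HB. dall. intros j h. rabs; lra. }
  destruct (completeness E bE nE) as [r [ub lub]].
  exists r. intros eps he.
  assert (h1 : D (fun j => r - eps < u j)).
  { destruct (classic (exists x, E x /\ r - eps < x)) as [[x [Ex hx]]|n].
    - dmp Ex. dall. intros j h. lra.
    - exfalso. assert (r <= r - eps); [|lra]. apply lub. intros x Ex.
      destruct (Rle_dec x (r - eps)); auto. exfalso; apply n; exists x; split; auto; lra. }
  assert (h2 : D (fun j => u j < r + eps)).
  { destruct (uf_ultra _ HU (fun j => u j < r + eps)) as [h|h]; auto.
    exfalso. assert (E (r + eps)).
    { unfold E. dmp h. dall. intros j hj. lra. }
    apply ub in H. lra. }
  dmp h1. dmp h2. dall. intros j a b. rabs; lra.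
Qed.
Open Scope Z_scope.


Record Hyp D (l : Zseq) : Prop := {
  hU : ultrafilter D;
  hbig : forall k : Z, D (fun j => k < l j);
  hpow : forall M : nat, D (fun j => l j ^ Z.of_nat M < Z.of_nat j);
  hpr : D (fun j => prime (Z.of_nat j)) }.

Lemma zneq D (HU : ultrafilter D) k : ~ zeq D k (sconst 0) -> D (fun j => k j <> 0).
Proof.
  intros H. destruct (uf_ultra _ HU (fun j => k j = 0)) as [h|h]; auto.
  exfalso; apply H; exact h.
Qed.

Lemma nzeq D (HU : ultrafilter D) k : D (fun j => k j <> 0) -> ~ zeq D k (sconst 0).
Proof.
  intros H E. destruct (Dex D HU _ (uf_inter _ HU _ _ H E)) as [j [a b]]. auto.
Qed.

Lemma pow_mono_pt (x : Z) m M : 1 <= x -> (m <= M)%nat -> x ^ Z.of_nat m <= x ^ Z.of_nat M.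
Proof. intros. apply Z.pow_le_mono_r; lia. Qed.

Lemma inZm_mono D l m M k : Hyp D l -> inZm D l m k -> (m <= M)%nat -> inZm D l M k.
Proof.
  intros H h hm. pose proof (hU _ _ H). unfold inZm in *. dmp h. dmp (hbig _ _ H 0). dall.
  intros j h0 h1. pose proof (pow_mono_pt (l j) m M ltac:(lia) hm). lia.
Qed.

Lemma Sm_lift D l m M z a b : Hyp D l -> Sm_pair D l m z a b -> (m <= M)%nat -> Sm_pair D l M z a b.
Proof.
  intros H [h1 [h2 [h3 [h4 h5]]]] hm. pose proof (hU _ _ H).
  repeat split; auto; try (eapply inZm_mono; eauto).
  dmp h5. dall. intros j h. nia.
Qed.

Lemma powfact D l m : Hyp D l ->
  D (fun j => 0 <= l j ^ Z.of_nat m /\ 2 * l j ^ Z.of_nat m * l j ^ Z.of_nat m <= l j ^ Z.of_nat (2 * m + 1)).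
Proof.
  intros H. pose proof (hU _ _ H). dmp (hbig _ _ H 1). dall. intros j h.
  replace (Z.of_nat (2 * m + 1)) with (Z.of_nat m + Z.of_nat m + 1) by lia.
  rewrite !Z.pow_add_r, Z.pow_1_r by lia.
  assert (0 <= l j ^ Z.of_nat m) by (apply Z.pow_nonneg; lia). nia.
Qed.

Lemma unique_pt (j z a b c d L : Z) :
  (j | z * b - a) -> (j | z * d - c) -> Z.abs a < L -> Z.abs b < L -> Z.abs c < L -> Z.abs d < L ->
  2 * L * L < j -> a * d = c * b.
Proof.
  intros h1 h2 ha hb hc hd hj.
  assert (hx : (j | c * b - a * d)).
  { replace (c * b - a * d) with ((z * b - a) * d - (z * d - c) * b) by ring.
    apply Z.divide_sub_r; apply Z.divide_mul_l; auto. }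
  destruct (Z.eq_dec (c * b - a * d) 0) as [e|ne]; [lia|].
  apply Zdivide_bounds in hx; auto.
  assert (Z.abs (c * b - a * d) <= Z.abs c * Z.abs b + Z.abs a * Z.abs d).
  { rewrite <- !Z.abs_mul. pose proof (Z.abs_triangle (c*b) (-(a*d))). rewrite Z.abs_opp in H. lia. }
  assert (Z.abs c * Z.abs b < L * L) by (apply Z.mul_lt_mono_nonneg; lia).
  assert (Z.abs a * Z.abs d < L * L) by (apply Z.mul_lt_mono_nonneg; lia).
  lia.
Qed.

Lemma pair_unique D l m m' z a b c d : Hyp D l ->
  Sm_pair D l m z a b -> Sm_pair D l m' z c d -> D (fun j => a j * d j = c j * b j).
Proof.
  intros H p1 p2. pose proof (hU _ _ H).
  apply (Sm_lift _ _ _ (Nat.max m m')) in p1; [|auto|lia].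
  apply (Sm_lift _ _ _ (Nat.max m m')) in p2; [|auto|lia].
  set (M := Nat.max m m') in *.
  destruct p1 as [h1 [h2 [h3 [h4 h5]]]]. destruct p2 as [g1 [g2 [g3 [g4 g5]]]].
  unfold inZm, Feq in *.
  dmp h1. dmp h2. dmp g1. dmp g2. dmp h4. dmp g4. dmp (powfact D l M H). dmp (hpow _ _ H (2 * M + 1)).
  dall. intros j q1 [q2 q3] f2 f1 e4 e3 e2 e1.
  eapply unique_pt with (z := z j) (L := l j ^ Z.of_nat M) (j := Z.of_nat j); unfold smul in *; eauto; lia.
Qed.


Lemma abs_prod_lt a b L : 0 <= L -> Z.abs a < L -> Z.abs b < L -> Z.abs (a * b) < L * L.
Proof. intros. rewrite Z.abs_mul. apply Z.mul_lt_mono_nonneg; lia. Qed.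

Lemma pair_add D l m z w a b c d : Hyp D l ->
  Sm_pair D l m z a b -> Sm_pair D l m w c d ->
  Sm_pair D l (2 * m + 1) (sadd z w) (fun j => a j * d j + c j * b j) (smul b d).
Proof.
  intros H [h1 [h2 [h3 [h4 h5]]]] [g1 [g2 [g3 [g4 g5]]]]. pose proof (hU _ _ H).
  apply zneq in h3; auto. apply zneq in g3; auto.
  unfold Sm_pair, inZm, Feq in *. split; [|split; [|split; [|split]]].
  - dmp h1. dmp h2. dmp g1. dmp g2. dmp (powfact D l m H). dall.
    intros j [q0 q] f2 f1 e2 e1.
    pose proof (abs_prod_lt (a j) (d j) _ q0 e1 f2).
    pose proof (abs_prod_lt (c j) (b j) _ q0 f1 e2).
    pose proof (Z.abs_triangle (a j * d j) (c j * b j)). lia.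
  - dmp h2. dmp g2. dmp (powfact D l m H). dall.
    intros j [q0 q] f2 e2. unfold smul.
    pose proof (abs_prod_lt (b j) (d j) _ q0 e2 f2). lia.
  - apply nzeq; auto. dmp h3. dmp g3. dall. intros j p1 p2. unfold smul. nia.
  - dmp h4. dmp g4. dall. intros j p1 p2. unfold smul, sadd in *.
    replace ((z j + w j) * (b j * d j) - (a j * d j + c j * b j)) with
      ((z j * b j - a j) * d j + (w j * d j - c j) * b j) by ring.
    apply Z.divide_add_r; apply Z.divide_mul_l; auto.
  - dmp h5. dmp g5. dall. intros j p1 p2. unfold smul.
    pose proof (Z.abs_triangle (a j * d j) (c j * b j)).
    rewrite !Z.abs_mul in *. rewrite Nat2Z.inj_add, Nat2Z.inj_mul.
    pose proof (Z.abs_nonneg (b j)). pose proof (Z.abs_nonneg (d j)). nia.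
Qed.

Lemma pair_opp D l m z a b : Hyp D l ->
  Sm_pair D l m z a b -> Sm_pair D l m (sopp z) (sopp a) b.
Proof.
  intros H [h1 [h2 [h3 [h4 h5]]]]. pose proof (hU _ _ H).
  unfold Sm_pair, inZm, Feq in *. split; [|split; [|split; [|split]]]; auto.
  - dmp h1. dall. intros j p. unfold sopp. rewrite Z.abs_opp; auto.
  - dmp h4. dall. intros j p. unfold smul, sopp in *.
    replace (- z j * b j - - a j) with (- (z j * b j - a j)) by ring.
    apply Z.divide_opp_r; auto.
  - dmp h5. dall. intros j p. unfold sopp. rewrite Z.abs_opp; auto.
Qed.

Lemma pair_mul D l m z w a b c d : Hyp D l ->
  Sm_pair D l m z a b -> Sm_pair D l m w c d ->
  Sm_pair D l (m * m + (2 * m + 1)) (smul z w) (smul a c) (smul b d).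
Proof.
  intros H [h1 [h2 [h3 [h4 h5]]]] [g1 [g2 [g3 [g4 g5]]]]. pose proof (hU _ _ H).
  apply zneq in h3; auto. apply zneq in g3; auto.
  unfold Sm_pair; split; [|split; [|split; [|split]]].
  - apply inZm_mono with (m := (2 * m + 1)%nat); auto; [|lia].
    unfold inZm in *. dmp h1. dmp g1. dmp (powfact D l m H). dall.
    intros j [q0 q] f1 e1. unfold smul.
    pose proof (abs_prod_lt (a j) (c j) _ q0 e1 f1). lia.
  - apply inZm_mono with (m := (2 * m + 1)%nat); auto; [|lia].
    unfold inZm in *. dmp h2. dmp g2. dmp (powfact D l m H). dall.
    intros j [q0 q] f1 e1. unfold smul.
    pose proof (abs_prod_lt (b j) (d j) _ q0 e1 f1). lia.
  - apply nzeq; auto. dmp h3. dmp g3. dall. intros j p1 p2. unfold smul. nia.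
  - unfold Feq in *. dmp h4. dmp g4. dall. intros j p1 p2. unfold smul in *.
    replace (z j * w j * (b j * d j) - a j * c j) with
      ((z j * b j - a j) * (w j * d j) + a j * (w j * d j - c j)) by ring.
    apply Z.divide_add_r; [apply Z.divide_mul_l | apply Z.divide_mul_r]; auto.
  - dmp h5. dmp g5. dall. intros j p1 p2. unfold smul.
    rewrite !Z.abs_mul in *. rewrite !Nat2Z.inj_add, !Nat2Z.inj_mul.
    pose proof (Z.abs_nonneg (a j)). pose proof (Z.abs_nonneg (c j)).
    pose proof (Z.abs_nonneg (b j)). pose proof (Z.abs_nonneg (d j)).
    assert (Z.abs (a j) * Z.abs (c j) <= (Z.of_nat m * Z.abs (b j)) * (Z.of_nat m * Z.abs (d j)))
      by (apply Z.mul_le_mono_nonneg; lia).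
    nia.
Qed.
Close Scope Z_scope.
Open Scope R_scope.


Definition ratio (a b : Zseq) : nat -> R := fun j => IZR (a j) / IZR (b j).

Definition Phi D l z r := exists m a b, Sm_pair D l m z a b /\ Dlim D (ratio a b) r.

Lemma div_le_aux x y c : 0 < y -> x <= c * y -> x / y <= c.
Proof.
  intros hy h. unfold Rdiv.
  apply Rmult_le_compat_r with (r := / y) in h; [|left; apply Rinv_0_lt_compat; auto].
  rewrite Rmult_assoc, Rinv_r in h; lra.
Qed.

Lemma pair_lim D l m z a b : Hyp D l -> Sm_pair D l m z a b -> exists r, Dlim D (ratio a b) r.
Proof.
  intros H [h1 [h2 [h3 [h4 h5]]]]. pose proof (hU _ _ H).
  apply zneq in h3; auto.
  apply Dlim_exists with (B := INR m); auto.
  dmp h3. dmp h5. dall. intros j p q. unfold ratio, Rdiv.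
  rewrite Rabs_mult, Rabs_inv, <- Rdiv_def, !Rabs_Zabs.
  apply div_le_aux.
  - apply IZR_lt. lia.
  - rewrite INR_IZR_INZ, <- mult_IZR. apply IZR_le. auto.
Qed.

Lemma ratio_eq D (HU : ultrafilter D) a b c d :
  D (fun j => (a j * d j = c j * b j)%Z) -> D (fun j => b j <> 0%Z) -> D (fun j => d j <> 0%Z) ->
  D (fun j => ratio a b j = ratio c d j).
Proof.
  intros E hb hd. dmp E. dmp hb. dmp hd. dall. intros j p q e. unfold ratio.
  apply (f_equal IZR) in e. rewrite !mult_IZR in e.
  apply not_0_IZR in p. apply not_0_IZR in q.
  field_simplify_eq; auto. lra.
Qed.

Lemma Phi_unique D l z r r' : Hyp D l -> Phi D l z r -> Phi D l z r' -> r = r'.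
Proof.
  intros H [m [a [b [p1 l1]]]] [m' [c [d [p2 l2]]]]. pose proof (hU _ _ H).
  pose proof (pair_unique _ _ _ _ _ _ _ _ _ H p1 p2) as E.
  destruct p1 as [_ [_ [h3 _]]]. destruct p2 as [_ [_ [g3 _]]].
  apply zneq in h3; auto. apply zneq in g3; auto.
  eapply Dlim_unique; eauto. eapply Dlim_ext; eauto.
  pose proof (ratio_eq D ltac:(auto) _ _ _ _ E h3 g3) as E'.
  dmp E'. dall. intros j e; auto.
Qed.

Definition phi D l (z : Zseq) : R :=
  match excluded_middle_informative (exists r, Phi D l z r) with
  | left h => proj1_sig (constructive_indefinite_description _ h)
  | right _ => 0 end.

Lemma phi_spec D l z r : Hyp D l -> Phi D l z r -> phi D l z = r.
Proof.
  intros H h. unfold phi. destruct excluded_middle_informative as [e|n].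
  - destruct (constructive_indefinite_description _ e) as [x hx]; simpl.
    eapply Phi_unique; eauto.
  - exfalso; apply n; eauto.
Qed.

Lemma pair_phi D l m z a b : Hyp D l -> Sm_pair D l m z a b -> Dlim D (ratio a b) (phi D l z).
Proof.
  intros H p. destruct (pair_lim _ _ _ _ _ _ H p) as [r hr].
  rewrite (phi_spec D l z r); auto. exists m, a, b; auto.
Qed.

Lemma common_pairs D l x y : Hyp D l -> Fl D l x -> Fl D l y ->
  exists m a b c d, Sm_pair D l m x a b /\ Sm_pair D l m y c d.
Proof.
  intros H [m [a [b p]]] [m' [c [d q]]].
  exists (Nat.max m m'), a, b, c, d. split; eapply Sm_lift; eauto; lia.
Qed.

Lemma Fl_add D l x y : Hyp D l -> Fl D l x -> Fl D l y -> Fl D l (sadd x y).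
Proof.
  intros H hx hy. destruct (common_pairs _ _ _ _ H hx hy) as [m [a [b [c [d [p q]]]]]].
  eexists; eexists; eexists; eapply pair_add; eauto.
Qed.

Lemma Fl_mul D l x y : Hyp D l -> Fl D l x -> Fl D l y -> Fl D l (smul x y).
Proof.
  intros H hx hy. destruct (common_pairs _ _ _ _ H hx hy) as [m [a [b [c [d [p q]]]]]].
  eexists; eexists; eexists; eapply pair_mul; eauto.
Qed.

Lemma Fl_opp D l x : Hyp D l -> Fl D l x -> Fl D l (sopp x).
Proof.
  intros H [m [a [b p]]]. eexists; eexists; eexists; eapply pair_opp; eauto.
Qed.

Lemma nz_of_pair D l m z a b : Hyp D l -> Sm_pair D l m z a b -> D (fun j => b j <> 0%Z).
Proof. intros H [_ [_ [h _]]]. apply zneq; auto. apply (hU _ _ H). Qed.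

Lemma phi_add D l x y : Hyp D l -> Fl D l x -> Fl D l y ->
  phi D l (sadd x y) = phi D l x + phi D l y.
Proof.
  intros H hx hy. pose proof (hU _ _ H).
  destruct (common_pairs _ _ _ _ H hx hy) as [m [a [b [c [d [p q]]]]]].
  pose proof (pair_add _ _ _ _ _ _ _ _ _ H p q) as s.
  apply phi_spec; auto. eexists; eexists; eexists; split; [exact s|].
  eapply Dlim_ext; [auto| |apply Dlim_plus; [auto|apply (pair_phi _ _ _ _ _ _ H p)|apply (pair_phi _ _ _ _ _ _ H q)]].
  dmp (nz_of_pair _ _ _ _ _ _ H p). dmp (nz_of_pair _ _ _ _ _ _ H q). dall.
  intros j e1 e2. unfold ratio, smul. rewrite plus_IZR, !mult_IZR.
  apply not_0_IZR in e1. apply not_0_IZR in e2. field; auto.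
Qed.

Lemma phi_mul D l x y : Hyp D l -> Fl D l x -> Fl D l y ->
  phi D l (smul x y) = phi D l x * phi D l y.
Proof.
  intros H hx hy. pose proof (hU _ _ H).
  destruct (common_pairs _ _ _ _ H hx hy) as [m [a [b [c [d [p q]]]]]].
  pose proof (pair_mul _ _ _ _ _ _ _ _ _ H p q) as s.
  apply phi_spec; auto. eexists; eexists; eexists; split; [exact s|].
  eapply Dlim_ext; [auto| |apply Dlim_mult; [auto|apply (pair_phi _ _ _ _ _ _ H p)|apply (pair_phi _ _ _ _ _ _ H q)]].
  dmp (nz_of_pair _ _ _ _ _ _ H p). dmp (nz_of_pair _ _ _ _ _ _ H q). dall.
  intros j e1 e2. unfold ratio, smul. rewrite !mult_IZR.
  apply not_0_IZR in e1. apply not_0_IZR in e2. field; auto.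
Qed.

Lemma phi_opp D l x : Hyp D l -> Fl D l x -> phi D l (sopp x) = - phi D l x.
Proof.
  intros H [m [a [b p]]]. pose proof (hU _ _ H).
  pose proof (pair_opp _ _ _ _ _ _ H p) as s.
  apply phi_spec; auto. eexists; eexists; eexists; split; [exact s|].
  eapply Dlim_ext; [auto| |apply Dlim_opp; [auto|apply (pair_phi _ _ _ _ _ _ H p)]].
  dall. intros j. unfold ratio, sopp. rewrite opp_IZR. unfold Rdiv. ring.
Qed.

Lemma normF_phi D l z r : Hyp D l -> Fl D l z -> (normF D l z r <-> r = Rabs (phi D l z)).
Proof.
  intros H hz. pose proof (hU _ _ H). split.
  - intros [m [a [b [p hl]]]].
    apply (Dlim_unique D H0 _ _ _ hl).
    eapply Dlim_ext; [auto| |apply Dlim_abs; [auto|apply (pair_phi _ _ _ _ _ _ H p)]].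
    dmp (nz_of_pair _ _ _ _ _ _ H p). dall. intros j e. unfold ratio.
    rewrite !abs_IZR. unfold Rdiv. rewrite Rabs_mult, Rabs_inv. auto.
  - intros ->. destruct hz as [m [a [b p]]]. exists m, a, b. split; auto.
    eapply Dlim_ext; [auto| |apply Dlim_abs; [auto|apply (pair_phi _ _ _ _ _ _ H p)]].
    dmp (nz_of_pair _ _ _ _ _ _ H p). dall. intros j e. unfold ratio.
    rewrite !abs_IZR. unfold Rdiv. rewrite Rabs_mult, Rabs_inv. auto.
Qed.


Fixpoint powt (M : nat) (t : term) : term :=
  match M with O => tone | S M' => tmul t (powt M' t) end.

Lemma teval_powt env M t j : teval env (powt M t) j = (teval env t j ^ Z.of_nat M)%Z.
Proof.
  induction M. - reflexivity.
  - change (teval env (powt (S M) t) j) with (teval env t j * teval env (powt M t) j)%Z.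
    rewrite IHM. replace (Z.of_nat (S M)) with (Z.succ (Z.of_nat M)) by lia.
    rewrite Z.pow_succ_r by lia. ring.
Qed.

Lemma get_hpow D fZ l : ultrafilter D -> elem_substructure D fZ ->
  (forall k, fZ k -> zlt D k qq) -> fZ l ->
  forall M : nat, D (fun j => (l j ^ Z.of_nat M < Z.of_nat j)%Z).
Proof.
  intros HU [_ ES] Hq Hl M.
  set (env := fun _ : nat => l).
  set (f := fex (feq (tvar 0) (powt M (tvar 1)))).
  assert (h : holds D (fun _ => True) env f).
  { simpl. exists (fun j => (l j ^ Z.of_nat M)%Z).
    split; auto. unfold zeq. dall. intros j. rewrite teval_powt. reflexivity. }
  apply (ES f env (fun _ => Hl)) in h. simpl in h. destruct h as [a [Fa E]].
  unfold zeq in E. pose proof (Hq a Fa) as Q. unfold zlt in Q.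
  dmp E. dmp Q. dall. intros j q e. rewrite teval_powt in e. simpl in e. unfold qq in q. unfold env in e. rewrite <- e. exact q.
Qed.

Lemma pair_one D l : Hyp D l -> Sm_pair D l 1 (sconst 1) (sconst 1) (sconst 1).
Proof.
  intros H. pose proof (hU _ _ H). unfold Sm_pair, inZm, Feq.
  assert (D (fun j => (Z.abs (sconst 1 j) < l j ^ Z.of_nat 1)%Z)).
  { dmp (hbig _ _ H 1). dall. intros j h. change (Z.of_nat 1) with 1%Z. rewrite Z.pow_1_r. unfold sconst. lia. }
  repeat split; auto.
  - apply nzeq; auto. dall. unfold sconst. lia.
  - dall. intros j. unfold smul, sconst. simpl. exists 0%Z. reflexivity.
  - dall. intros j. unfold sconst. simpl. lia.
Qed.

Lemma pair_zero D l : Hyp D l -> Sm_pair D l 1 (sconst 0) (sconst 0) (sconst 1).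
Proof.
  intros H. pose proof (hU _ _ H). unfold Sm_pair, inZm, Feq.
  repeat split.
  - dmp (hbig _ _ H 1). dall. intros j h. change (Z.of_nat 1) with 1%Z. rewrite Z.pow_1_r. unfold sconst. lia.
  - dmp (hbig _ _ H 1). dall. intros j h. change (Z.of_nat 1) with 1%Z. rewrite Z.pow_1_r. unfold sconst. lia.
  - apply nzeq; auto. dall. unfold sconst. lia.
  - dall. intros j. unfold smul, sconst. simpl. exists 0%Z. reflexivity.
  - dall. intros j. unfold sconst. simpl. lia.
Qed.

Lemma phi_one D l : Hyp D l -> phi D l (sconst 1) = 1.
Proof.
  intros H. pose proof (hU _ _ H). apply phi_spec; auto. exists 1%nat, (sconst 1), (sconst 1).
  split; [apply pair_one; auto|]. eapply Dlim_ext; [auto| |apply (Dlim_const D H0 1)].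
  dall. intros j. unfold ratio, sconst. field.
Qed.

Lemma approx_phi D l x y : Hyp D l -> Fl D l x -> Fl D l y ->
  (forall r, dK D l x y r <-> r = Rabs (phi D l x - phi D l y)).
Proof.
  intros H hx hy r. unfold dK. rewrite normF_phi; auto.
  - rewrite phi_add, phi_opp; auto. 2: apply Fl_opp; auto. reflexivity.
  - apply Fl_add; auto. apply Fl_opp; auto.
Qed.

Lemma small_n d : 0 < d -> exists n : nat, (0 < n)%nat /\ / INR n < d.
Proof.
  intros hd. destruct (archimed (/ d)) as [h1 _].
  assert (0 < / d) by (apply Rinv_0_lt_compat; auto).
  exists (Z.to_nat (up (/ d))). assert (0 < up (/ d))%Z by (apply lt_IZR; lra).
  split; [lia|]. rewrite INR_IZR_INZ, Z2Nat.id by lia.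
  set (u := up (/ d)) in *. rewrite <- (Rinv_inv d). apply Rinv_lt_contravar.
  - apply Rmult_lt_0_compat; auto. apply IZR_lt in H0. lra.
  - lra.
Qed.

Lemma approx_iff D l x y : Hyp D l -> Fl D l x -> Fl D l y ->
  (approx D l x y <-> phi D l x = phi D l y).
Proof.
  intros H hx hy. unfold approx. split.
  - intros h. destruct (Req_dec (phi D l x) (phi D l y)) as [e|ne]; auto. exfalso.
    assert (0 < Rabs (phi D l x - phi D l y)) by (apply Rabs_pos_lt; lra).
    destruct (small_n _ H0) as [n [hn hl]].
    destruct (h n hn) as [r [hr hr']]. rewrite approx_phi in hr; auto. lra.
  - intros e n hn. exists 0. split.
    + rewrite approx_phi; auto. rewrite e, Rminus_diag, Rabs_R0. auto.
    + left. apply Rinv_0_lt_compat. apply lt_0_INR. auto.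
Qed.


Lemma inv_exists (l : Zseq) : forall j : nat, exists c : Z,
  (prime (Z.of_nat j) /\ (1 <= l j < Z.of_nat j)%Z) -> (Z.of_nat j | c * l j - 1)%Z.
Proof.
  intros j. destruct (classic (prime (Z.of_nat j) /\ (1 <= l j < Z.of_nat j)%Z)) as [[hp hl]|n].
  - destruct (rel_prime_bezout _ _ (rel_prime_le_prime _ _ hp hl)) as [u v e].
    exists u. intros _. exists (- v)%Z. lia.
  - exists 0%Z. intros h; contradiction.
Qed.

Lemma big_nat r : exists M : nat, (2 <= M)%nat /\ Rabs r + 2 <= INR M.
Proof.
  destruct (archimed (Rabs r + 2)) as [h1 _].
  pose proof (Rabs_pos r).
  assert (0 < up (Rabs r + 2))%Z by (apply lt_IZR; lra).
  exists (Z.to_nat (up (Rabs r + 2))). rewrite INR_IZR_INZ, Z2Nat.id by lia.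
  split; [|lra]. assert (2 < IZR (up (Rabs r + 2))) by lra.
  apply lt_IZR in H1. lia.
Qed.

Lemma surj D l r : Hyp D l -> exists x, Fl D l x /\ phi D l x = r.
Proof.
  intros H. pose proof (hU _ _ H) as HU.
  set (cinv := fun j => proj1_sig (constructive_indefinite_description _ (inv_exists l j))).
  assert (hc : forall j, (prime (Z.of_nat j) /\ (1 <= l j < Z.of_nat j)%Z) ->
     (Z.of_nat j | cinv j * l j - 1)%Z).
  { intros j. unfold cinv. destruct (constructive_indefinite_description _ _); auto. }
  set (k1 := fun j => Int_part (r * IZR (l j))).
  set (x := fun j => (cinv j * k1 j)%Z).
  destruct (big_nat r) as [M [hM2 hMr]].
  assert (hk : D (fun j => (Z.abs (k1 j) < Z.of_nat M * l j)%Z /\ (Z.of_nat M < l j)%Z)).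
  { dmp (hbig _ _ H (Z.of_nat M)). dall. intros j hl. split; [|lia].
    apply lt_IZR. rewrite abs_IZR, mult_IZR, <- INR_IZR_INZ.
    destruct (base_Int_part (r * IZR (l j))) as [b1 b2]. fold (k1 j) in b1, b2.
    assert (2 <= IZR (l j)) by (apply IZR_le; lia).
    assert (Rabs (r * IZR (l j)) = Rabs r * IZR (l j)) by (rewrite Rabs_mult, (Rabs_right (IZR (l j))); [reflexivity|lra]).
    assert (Rabs (IZR (k1 j)) < Rabs r * IZR (l j) + 1).
    { pose proof (Rle_abs (r * IZR (l j))). pose proof (Rle_abs (- (r * IZR (l j)))).
      rewrite Rabs_Ropp in H3. apply Rabs_def1; lra. }
    pose proof (Rabs_pos r). nra. }
  assert (p : Sm_pair D l M x k1 l).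
  { unfold Sm_pair, inZm, Feq. split; [|split; [|split; [|split]]].
    - dmp hk. dall. intros j [h1 h2].
      pose proof (pow_mono_pt (l j) 2 M ltac:(lia) hM2).
      change (Z.of_nat 2) with 2%Z in H0. rewrite Z.pow_2_r in H0. nia.
    - dmp hk. dall. intros j [h1 h2].
      pose proof (pow_mono_pt (l j) 2 M ltac:(lia) hM2).
      change (Z.of_nat 2) with 2%Z in H0. rewrite Z.pow_2_r in H0. nia.
    - apply nzeq; auto. dmp hk. dall. intros j [h1 h2]. lia.
    - dmp (hpr _ _ H). dmp (hpow _ _ H 1). dmp hk. dall. intros j [h1 h2] e1 e2.
      change (Z.of_nat 1) with 1%Z in e1. rewrite Z.pow_1_r in e1.
      assert (hh := hc j ltac:(split; [auto|lia])).
      unfold smul, x.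
      replace (cinv j * k1 j * l j - k1 j)%Z with (k1 j * (cinv j * l j - 1))%Z by ring.
      apply Z.divide_mul_r; auto.
    - dmp hk. dall. intros j [h1 h2]. lia. }
  exists x. split; [exists M, k1, l; auto|].
  apply phi_spec; auto. exists M, k1, l. split; auto.
  intros eps he. destruct (small_n _ he) as [N [hN hNe]].
  dmp (hbig _ _ H (Z.of_nat N)). dall. intros j hl.
  unfold ratio.
  assert (hL : INR N < IZR (l j)) by (rewrite INR_IZR_INZ; apply IZR_lt; auto).
  assert (h0 : 0 < INR N) by (apply lt_0_INR; auto).
  destruct (base_Int_part (r * IZR (l j))) as [b1 b2]. fold (k1 j) in b1, b2.
  set (L := IZR (l j)) in *.
  assert (ht : / L < / INR N) by (apply Rinv_lt_contravar; nra).
  assert (hL0 : 0 < / L) by (apply Rinv_0_lt_compat; lra).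
  assert (hLL : L * / L = 1) by (apply Rinv_r; lra).
  replace (IZR (k1 j) / L - r) with ((IZR (k1 j) - r * L) * / L).
  2:{ unfold Rdiv. rewrite Rmult_minus_distr_r. rewrite (Rmult_assoc r), hLL. ring. }
  apply Rabs_def1; nra.
Qed.

Theorem mainTheorem5
  (D : (nat -> Prop) -> Prop) (n : Zseq) (fZ : Zseq -> Prop) (l : Zseq) :
  ultrafilter D -> nonprincipal D ->
  D (fun j => prime (Z.of_nat j)) ->
  contains_Z fZ -> elem_substructure D fZ ->
  (forall k, fZ k -> zlt D k (qq)) ->
  fZ l -> (forall k : Z, zlt D (sconst k) l) ->
  (forall j, (0 < n j)%Z) ->
  D (fun j => (Z.of_nat j <= n j)%Z) ->
  D (fun j => (Z.of_nat j | n j)%Z) ->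
  ((forall x y, Kl D l x -> Kl D l y ->
      Kl D l (sadd x y) /\ Kl D l (smul x y) /\ Kl D l (sopp x)) /\
   Kl D l (sconst 0) /\ Kl D l (sconst 1)) /\
  (forall x x' y y', Kl D l x -> Kl D l x' -> Kl D l y -> Kl D l y' ->
      approx D l x x' -> approx D l y y' ->
      approx D l (sadd x y) (sadd x' y') /\
      approx D l (smul x y) (smul x' y') /\
      approx D l (sopp x) (sopp x')) /\
  (exists phi : Zseq -> R,
      (forall x y, Kl D l x -> Kl D l y -> (approx D l x y <-> phi x = phi y)) /\
      (forall r : R, exists x, Kl D l x /\ phi x = r) /\
      (forall x y, Kl D l x -> Kl D l y ->
          phi (sadd x y) = phi x + phi y /\ phi (smul x y) = phi x * phi y) /\
      phi (sconst 1) = 1 /\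
      (forall x y r, Kl D l x -> Kl D l y ->
          (dK D l x y r <-> r = Rabs (phi x - phi y)))).
Proof.
  intros HU _ Hpr _ ES Hq Hl Hbig _ _ _.
  assert (H : Hyp D l).
  { constructor; auto. eapply get_hpow; eauto. }
  unfold Kl. split; [|split].
  - split; [|split].
    + intros x y hx hy. split; [|split]; [apply Fl_add|apply Fl_mul|apply Fl_opp]; auto.
    + exists 1%nat, (sconst 0), (sconst 1). apply pair_zero; auto.
    + exists 1%nat, (sconst 1), (sconst 1). apply pair_one; auto.
  - intros x x' y y' hx hx' hy hy' ax ay.
    rewrite approx_iff in ax, ay by auto.
    split; [|split]; (rewrite approx_iff; [| auto | | ]);
      try (apply Fl_add || apply Fl_mul || apply Fl_opp); auto.
    + rewrite !phi_add by auto. congruence.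
    + rewrite !phi_mul by auto. congruence.
    + rewrite !phi_opp by auto. congruence.
  - exists (phi D l). split; [|split; [|split; [|split]]].
    + intros x y hx hy. apply approx_iff; auto.
    + intros r. apply surj; auto.
    + intros x y hx hy. split; [apply phi_add|apply phi_mul]; auto.
    + apply phi_one; auto.
    + intros x y r hx hy. apply approx_phi; auto.
Qed.
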